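(* Let $W\subset D_2(H)$ be the subgroup generated by all elements $T(a_i,b_j;b_k,b_l)$, $1\le i,j,k,l\le g$, and let $N:=\operatorname{Ker}(\operatorname{Tr}^A|_W:W\to S^2(H'))$. For indices set $①_{i,j,k,l}:=T(a_i,b_j;b_k,b_l)$, $②_{i,j,k}:=T(a_i,b_j;b_k,b_i)$, $③_{i,k,l}:=T(a_i,b_i;b_k,b_l)$, $④_{i,k}:=T(a_i,b_i;b_k,b_i)$, always with $i$ different from $j,k,l$. Then $N$ is generated by all elements $①_{i,j,k,l}$, all elements $③_{i,k,l}$, and the elements $$②_{i,j,j}-②_{i',j,j},\quad ②_{i,j,k}-②_{i',j,k},\quad ②_{i,j,k}-②_{i',k,j},\quad ②_{i,j,k}-④_{j,k},\quad ②_{i,j,k}-④_{k,j},\quad ④_{i,k}-④_{k,i},$$ where $i,i'\notin\{j,k\}$ and $j\ne k$ (and $i\ne k$ in $④_{i,k}$).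
   Context: Let $g\ge 2$, $\Sigma_{g,1}$ a compact connected oriented surface of genus $g$ with one boundary component, $H=H_1(\Sigma_{g,1};\mathbb Z)$ with intersection form $\omega$, $\mathcal L(H)$ the free Lie ring on $H$ embedded in $T(H)$ via $[x,y]=x\otimes y-y\otimes x$, and $D_2(H):=\ker(H\otimes\mathcal L_3(H)\to\mathcal L_4(H),\ h\otimes u\mapsto[h,u])$. For $a,b,c,d\in H$, $T(a,b;c,d):=a\otimes[b,[c,d]]+b\otimes[[c,d],a]+c\otimes[d,[a,b]]+d\otimes[[a,b],c]\in D_2(H)$. Let $V_g$ be a handlebody with $\Sigma_{g,1}\subset\partial V_g$; $A:=\ker(H\to H_1(V_g;\mathbb Z))$, $H':=H/A$, $x'$ the class of $x\in H$; fix a symplectic basis $(a_1,\dots,a_g,b_1,\dots,b_g)$ of $H$ ($\omega(a_i,b_j)=\delta_{ij}$, $\omega(a_i,a_j)=\omega(b_i,b_j)=0$) with $a_i\in A$. $\omega':A\times H'\to\mathbb Z$, $\omega'(a,x')=\omega(a,x)$. With $p:H\otimes\mathcal L_3(H)\to H\otimes\mathcal L_3(H')$ induced by $H\to H'$ and $K_A:=\ker(D_2(H)\to D_2(H'))$ (so $p(K_A)\subset A\otimes\mathcal L_3(H')$; all elements $T(a_i,\cdot;\cdot,\cdot)$ above lie in $K_A$), $\operatorname{Tr}^A:K_A\to S^2(H')$ is the composite of $p$, $A\otimes\mathcal L_3(H')\subset A\otimes H'^{\otimes3}$, the contraction $a\otimes x\otimes y\otimes z\mapsto\omega'(a,x)\,y\otimes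 z$, and projection to $S^2(H')$. *)

(* Defs.v *)
From mathcomp Require Import all_boot all_order all_algebra.
Set Implicit Arguments. Unset Strict Implicit. Unset Printing Implicit Defensive.
Import GRing.Theory Num.Theory.
Local Open Scope ring_scope.

(* H = H_1(Sigma_{g,1};Z) = Z^{2g} with symplectic basis a_1..a_g, b_1..b_g.
   Basis index type: inl i = a_i, inr i = b_i. *)
Definition B (g : nat) : finType := ('I_g + 'I_g)%type.

Definition vec (g : nat) := {ffun B g -> int}.
Definition ebasis g (x : B g) : vec g := [ffun y => ((x == y) : nat)%:Z].
Definition a_ g (i : 'I_g) : vec g := ebasis (inl i).
Definition b_ g (i : 'I_g) : vec g := ebasis (inr i).

Definition omega g (x y : B g) : int :=
  match x, y with
  | inl i, inr j => ((i == j) : nat)%:Z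
  | inr i, inl j => - ((i == j) : nat)%:Z
  | _, _ => 0
  end.

(* H^{(x)4}, the ambient group of H (x) L_3(H) (hence of D_2(H)),
   via L(H) in T(H). Coefficients w.r.t. the basis e_x(x)e_y(x)e_z(x)e_w. *)
Definition T4 (g : nat) := {ffun B g * B g * B g * B g -> int}.

Definition br11 g (u v : vec g) : B g -> B g -> int :=
  fun y z => u y * v z - v y * u z.
Definition br12 g (u : vec g) (m : B g -> B g -> int) : B g -> B g -> B g -> int :=
  fun y z w => u y * m z w - m y z * u w.
Definition br21 g (m : B g -> B g -> int) (u : vec g) : B g -> B g -> B g -> int :=
  fun y z w => m y z * u w - u y * m z w.

(* T(a,b;c,d) = a(x)[b,[c,d]] + b(x)[[c,d],a] + c(x)[d,[a,b]] + d(x)[[a,b],c] *)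
Definition Tel g (a b c d : vec g) : T4 g :=
  [ffun p => let '(x, y, z, w) := p in
     a x * br12 b (br11 c d) y z w + b x * br21 (br11 c d) a y z w
   + c x * br12 d (br11 a b) y z w + d x * br21 (br11 a b) c y z w].

Inductive zgen (V : zmodType) (P : V -> Prop) : V -> Prop :=
  | zgen0 : zgen P 0
  | zgen_gen x : P x -> zgen P x
  | zgen_sub x y : zgen P x -> zgen P y -> zgen P (x - y).

(* H' = H/A with A = span(a_i) has basis b'_1..b'_g (images of b_i; a_i |-> 0).
   omega'(a_i, b'_j) = omega(a_i, b_j). *)
Definition omega' g (i j : 'I_g) : int := omega (inl i) (inr j).

(* Contraction of p(t) in A(x)H'^{(x)3}: coefficient of b'_y(x)b'_z in H'(x)H'
   of sum omega'(a,x') y'(x)z'. *)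
Definition contrA g (t : T4 g) (y z : 'I_g) : int :=
  \sum_(i < g) \sum_(j < g) t (inl i, inr j, inr y, inr z) * omega' i j.

(* S^2(H') is free on the monomials b'_y b'_z (y <= z); we record the
   coefficients as a symmetric function on pairs. *)
Definition S2 (g : nat) := {ffun 'I_g * 'I_g -> int}.
Definition proj_S2 g (m : 'I_g -> 'I_g -> int) : S2 g :=
  [ffun yz => if yz.1 == yz.2 then m yz.1 yz.1 else m yz.1 yz.2 + m yz.2 yz.1].

Definition TrA g (t : T4 g) : S2 g := proj_S2 (contrA t).

Definition Wgens g (t : T4 g) : Prop :=
  exists i j k l : 'I_g, t = Tel (a_ i) (b_ j) (b_ k) (b_ l).
Definition W g (t : T4 g) : Prop := zgen (@Wgens g) t.
Definition N g (t : T4 g) : Prop := W t /\ TrA t = 0.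

Definition e1 g (i j k l : 'I_g) : T4 g := Tel (a_ i) (b_ j) (b_ k) (b_ l).
Definition e2 g (i j k : 'I_g) : T4 g := Tel (a_ i) (b_ j) (b_ k) (b_ i).
Definition e3 g (i k l : 'I_g) : T4 g := Tel (a_ i) (b_ i) (b_ k) (b_ l).
Definition e4 g (i k : 'I_g) : T4 g := Tel (a_ i) (b_ i) (b_ k) (b_ i).

Definition Ngens g (t : T4 g) : Prop :=
  (exists i j k l : 'I_g, [/\ i != j, i != k & i != l] /\ t = e1 i j k l)
  \/ (exists i k l : 'I_g, [/\ i != k & i != l] /\ t = e3 i k l)
  \/ (exists i i' j : 'I_g, [/\ i != j & i' != j] /\ t = e2 i j j - e2 i' j j)
  \/ (exists i i' j k : 'I_g, [/\ i \notin [:: j; k], i' \notin [:: j; k] & j != k]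
        /\ [\/ t = e2 i j k - e2 i' j k,
               t = e2 i j k - e2 i' k j,
               t = e2 i j k - e4 j k
             | t = e2 i j k - e4 k j])
  \/ (exists i k : 'I_g, i != k /\ t = e4 i k - e4 k i).

(* Main.v *)
Require Import Defs.
From mathcomp Require Import all_boot all_order all_algebra ring.
Set Implicit Arguments. Unset Strict Implicit. Unset Printing Implicit Defensive.
Import GRing.Theory.
Local Open Scope ring_scope.

Definition dl g (x y : 'I_g) : int := ((x == y) : nat)%:Z.
Lemma dlxx g (x : 'I_g) : dl x x = 1. Proof. by rewrite /dl eqxx. Qed.
Lemma dlF g (x y : 'I_g) : x != y -> dl x y = 0. Proof. by rewrite /dl => /negbTE ->. Qed.
Lemma b_inr g (j m : 'I_g) : b_ j (inr m) = dl j m. Proof. by rewrite /b_ /ebasis ffunE. Qed.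
Lemma b_inl g (j m : 'I_g) : b_ j (inl m) = 0. Proof. by rewrite /b_ /ebasis ffunE. Qed.
Lemma a_inl g (j m : 'I_g) : a_ j (inl m) = dl j m. Proof. by rewrite /a_ /ebasis ffunE. Qed.
Lemma a_inr g (j m : 'I_g) : a_ j (inr m) = 0. Proof. by rewrite /a_ /ebasis ffunE. Qed.

Lemma sum_dl_r g (F : 'I_g -> int) i : \sum_(j < g) F j * dl i j = F i.
Proof.
rewrite (bigD1 i) //= dlxx mulr1 big1 ?addr0 // => j hj.
by rewrite dlF ?mulr0 // eq_sym.
Qed.
Lemma sum_dl_l g (F : 'I_g -> int) i : \sum_(j < g) dl i j * F j = F i.
Proof. by rewrite -[RHS](sum_dl_r F i); apply: eq_bigr => j _; rewrite mulrC. Qed.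

Lemma Tel_cc g (a b c : vec g) : Tel a b c c = 0.
Proof. apply/ffunP => -[[[x y] z] w]; rewrite !ffunE /br12 /br21 /br11; ring. Qed.
Lemma Tel_anti g (a b c d : vec g) : Tel a b c d = - Tel a b d c.
Proof. apply/ffunP => -[[[x y] z] w]; rewrite !ffunE /br12 /br21 /br11; ring. Qed.

Lemma contrA_Tel g (i j k l y z : 'I_g) :
  contrA (Tel (a_ i) (b_ j) (b_ k) (b_ l)) y z =
  dl j i * (dl k y * dl l z - dl l y * dl k z) - (dl k i * dl l y - dl l i * dl k y) * dl j z.
Proof.
rewrite /contrA.
rewrite (eq_bigr (fun i' => dl i i' * (dl j i' * (dl k y * dl l z - dl l y * dl k z)
   - (dl k i' * dl l y - dl l i' * dl k y) * dl j z))).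
  by rewrite sum_dl_l.
move=> i' _; rewrite /omega' /=.
rewrite (eq_bigr (fun j' => Tel (a_ i) (b_ j) (b_ k) (b_ l) (inl i', inr j', inr y, inr z) * dl i' j')) //.
rewrite sum_dl_r ffunE /br12 /br21 /br11 !a_inl !b_inl !b_inr !a_inr; ring.
Qed.

Definition mono g (k j : 'I_g) : S2 g := proj_S2 (fun u v => dl k u * dl j v).

Lemma TrA_Tel g (i j k l : 'I_g) :
  TrA (Tel (a_ i) (b_ j) (b_ k) (b_ l)) =
  (if l == i then mono k j else 0) - (if k == i then mono l j else 0).
Proof.
apply/ffunP => -[y z]; rewrite /TrA /mono !ffunE /= !contrA_Tel /dl.
case hl: (l == i); case hk: (k == i); rewrite !ffunE /=; case: (y == z); ring.
Qed.

Lemma monoC g (k j : 'I_g) : mono k j = mono j k.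
Proof. apply/ffunP => -[y z]; rewrite !ffunE /=; case: (y == z); ring. Qed.

Lemma TrAB g (x y : T4 g) : TrA (x - y) = TrA x - TrA y.
Proof.
apply/ffunP => -[u v]; rewrite !ffunE /= /contrA.
have E : forall a b, \sum_(i < g) \sum_(j < g) (x - y) (inl i, inr j, inr a, inr b) * omega' i j
  = \sum_(i < g) \sum_(j < g) x (inl i, inr j, inr a, inr b) * omega' i j
  - \sum_(i < g) \sum_(j < g) y (inl i, inr j, inr a, inr b) * omega' i j.
  move=> a b; rewrite -sumrB; apply: eq_bigr => i _; rewrite -sumrB.
  by apply: eq_bigr => j _; rewrite !ffunE mulrBl.
rewrite !E; case: (u == v) => //; ring.
Qed.
Lemma TrA0 g : TrA (0 : T4 g) = 0.
Proof. by rewrite -(subrr (0 : T4 g)) TrAB subrr. Qed.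

Definition oth g (y : 'I_g) : 'I_g := odflt y [pick x | x != y].
Lemma othP g (y : 'I_g) : (2 <= g)%N -> oth y != y.
Proof.
move=> hg; rewrite /oth; case: pickP => [x //|].
move=> H; exfalso.
have h0 : (0 < g)%N by apply: leq_trans hg.
have h1 : (1 < g)%N by [].
case: (eqVneq (val y) 0%N) => hy.
  have := H (Ordinal h1); rewrite /= => /negbFE/eqP/(congr1 val); rewrite /= hy //.
have := H (Ordinal h0); rewrite /= => /negbFE/eqP/(congr1 val); rewrite /= => e.
by move: hy; rewrite /= -e eqxx.
Qed.

Definition phi g (s : S2 g) : T4 g :=
  \sum_(y < g) e2 (oth y) y y *~ s (y,y)
  + \sum_(y < g) \sum_(z < g) e4 y z *~ (if (y < z)%N then s (y,z) else 0).

Lemma phiB g (s1 s2 : S2 g) : phi (s1 - s2) = phi s1 - phi s2.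
Proof.
rewrite /phi.
have E1 : \sum_(y < g) e2 (oth y) y y *~ (s1 - s2) (y,y) =
  \sum_(y < g) e2 (oth y) y y *~ s1 (y,y) - \sum_(y < g) e2 (oth y) y y *~ s2 (y,y).
  by rewrite -sumrB; apply: eq_bigr => y _; rewrite !ffunE mulrzBr.
have E2 : \sum_(y < g) \sum_(z < g) e4 y z *~ (if (y < z)%N then (s1 - s2) (y,z) else 0) =
  \sum_(y < g) \sum_(z < g) e4 y z *~ (if (y < z)%N then s1 (y,z) else 0)
  - \sum_(y < g) \sum_(z < g) e4 y z *~ (if (y < z)%N then s2 (y,z) else 0).
  rewrite -sumrB; apply: eq_bigr => y _; rewrite -sumrB; apply: eq_bigr => z _.
  rewrite !ffunE; case: ifP => _; by rewrite ?mulrzBr ?mulr0z ?subr0.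
rewrite E1 E2; set A := \sum_(y < g) _; set B := \sum_(y < g) _.
by rewrite addrACA opprD.
Qed.
Lemma phi0 g : phi (0 : S2 g) = 0.
Proof. by rewrite -(subrr (0 : S2 g)) phiB subrr. Qed.
Lemma phiN g (s : S2 g) : phi (- s) = - phi s.
Proof. by rewrite -sub0r phiB phi0 sub0r. Qed.

Lemma dsum g (V : zmodType) (F : 'I_g -> 'I_g -> V) k j :
  \sum_(y < g) \sum_(z < g) F y z *~ (if (y < z)%N then dl k y * dl j z else 0)
  = if (k < j)%N then F k j else 0.
Proof.
rewrite (bigD1 k) //= [X in _ + X]big1 ?addr0; last first.
  move=> y hy; apply: big1 => z _; rewrite dlF 1?eq_sym //.
  by case: ifP => _; rewrite ?mul0r mulr0z.
rewrite (bigD1 j) //= [X in _ + X]big1 ?addr0; last first.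
  move=> z hz; rewrite (dlF (x:=j)) 1?eq_sym //.
  by case: ifP => _; rewrite ?mulr0 mulr0z.
by rewrite !dlxx; case: ifP => _; rewrite ?mulr1 ?mulr1z ?mulr0z.
Qed.

Lemma phi_mono g (k j : 'I_g) :
  phi (mono k j) = e2 (oth k) k k *~ dl j k
    + (if (k < j)%N then e4 k j else 0) + (if (j < k)%N then e4 j k else 0).
Proof.
rewrite /phi -addrA; congr (_ + _).
  rewrite (bigD1 k) //= [X in _ + X]big1 ?addr0; last first.
    by move=> y hy; rewrite ffunE /= eqxx dlF 1?eq_sym // mul0r mulr0z.
  by rewrite ffunE /= eqxx dlxx mul1r.
rewrite -(dsum (fun y z => e4 y z) k j) -(dsum (fun y z => e4 y z) j k) -big_split /=.
apply: eq_bigr => y _; rewrite -big_split /=; apply: eq_bigr => z _.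
rewrite -mulrzDr_tmp; congr (_ *~ _); rewrite ffunE /=.
case: ifP => // h; rewrite ifN; first by rewrite [dl j y * _]mulrC.
by apply/negP => /eqP e; rewrite e ltnn in h.
Qed.

Lemma re (V : zmodType) (x y a b : V) : x - y - (a - b) = (x - a) - (y - b).
Proof. by rewrite !opprB addrACA [RHS]addrACA [- a + _]addrC. Qed.

Lemma zgenN (V : zmodType) (P : V -> Prop) x : zgen P x -> zgen P (- x).
Proof. by move=> h; rewrite -sub0r; apply: zgen_sub => //; apply: zgen0. Qed.

Lemma notin2 g (i j k : 'I_g) : i != j -> i != k -> i \notin [:: j; k].
Proof. by move=> h1 h2; rewrite !inE negb_or h1 h2. Qed.

Lemma key_li g (hg : (2 <= g)%N) (i j k : 'I_g) : k != i ->
  zgen (@Ngens g) (Tel (a_ i) (b_ j) (b_ k) (b_ i) - phi (mono k j)).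
Proof.
move=> hki; rewrite phi_mono.
case: (eqVneq j k) => [ejk|hjk].
  subst j; rewrite dlxx mulr1z ltnn /= !addr0; apply: zgen_gen; right; right; left.
  exists i, (oth k), k; split; last by [].
  by split; [rewrite eq_sym | apply: othP].
rewrite dlF // mulr0z add0r.
have hik : i != k by rewrite eq_sym.
case: (eqVneq j i) => [ej|hji].
  subst j.
  case: (ltngtP k i) => h.
  - rewrite /= addr0; apply: zgen_gen; right; right; right; right; exists i, k; by split.
  - by rewrite /= add0r subrr; apply: zgen0.
  - by move/val_inj: h => e; rewrite e eqxx in hjk.
have hij : i != j by rewrite eq_sym.
apply: zgen_gen; right; right; right; left.
exists i, i, j, k; split; first by split; rewrite ?notin2.
case: (ltngtP k j) => h /=.
- by rewrite addr0; apply: Or44.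
- by rewrite add0r; apply: Or43.
- by move/val_inj: h => e; rewrite e eqxx in hjk.
Qed.

Lemma key g (hg : (2 <= g)%N) (i j k l : 'I_g) :
  zgen (@Ngens g) (Tel (a_ i) (b_ j) (b_ k) (b_ l) - phi (TrA (Tel (a_ i) (b_ j) (b_ k) (b_ l)))).
Proof.
case: (eqVneq k l) => [ekl|hkl].
  by subst l; rewrite Tel_cc TrA0 phi0 subrr; apply: zgen0.
rewrite TrA_Tel.
case: (eqVneq l i) => [eli|hli]; case: (eqVneq k i) => [eki|hki].
- by subst; rewrite eqxx in hkl.
- by subst l; rewrite subr0; apply: key_li.
- subst k; rewrite sub0r phiN Tel_anti opprK addrC -opprB; apply: zgenN.
  by apply: key_li.
- rewrite subr0 phi0 subr0; apply: zgen_gen.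
  case: (eqVneq i j) => [eij|hij].
    subst j; right; left; exists i, k, l; split; [by split; rewrite eq_sym|by []].
  left; exists i, j, k, l; split; [by split; rewrite // eq_sym|by []].
Qed.

Lemma Wkey g (hg : (2 <= g)%N) (t : T4 g) : W t -> zgen (@Ngens g) (t - phi (TrA t)).
Proof.
elim => [|x [i [j [k [l ->]]]]|x y _ hx _ hy].
- by rewrite TrA0 phi0 subrr; apply: zgen0.
- exact: key.
- rewrite TrAB phiB.
  rewrite re.
  exact: zgen_sub.
Qed.

Lemma W2 g (i j k : 'I_g) : Wgens (e2 i j k). Proof. by exists i, j, k, i. Qed.
Lemma W4 g (i k : 'I_g) : Wgens (e4 i k). Proof. by exists i, i, k, i. Qed.

Lemma TrA2 g (i j k : 'I_g) : k != i -> TrA (e2 i j k) = mono k j.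
Proof. by move=> h; rewrite /e2 TrA_Tel eqxx (negbTE h) subr0. Qed.
Lemma TrA4 g (i k : 'I_g) : k != i -> TrA (e4 i k) = mono k i.
Proof. by move=> h; rewrite /e4 TrA_Tel eqxx (negbTE h) subr0. Qed.

Lemma Ngens_N g (t : T4 g) : Ngens t -> N t.
Proof.
case=> [[i [j [k [l [[hij hik hil] ->]]]]]|
       [[i [k [l [[hik hil] ->]]]]|
       [[i [i' [j [[hij hij'] ->]]]]|
       [[i [i' [j [k [[hi hi' hjk] H]]]]]|
       [i [k [hik ->]]]]]]].
- split; first by apply: zgen_gen; exists i, j, k, l.
  by rewrite /e1 TrA_Tel eq_sym (negbTE hil) eq_sym (negbTE hik) subr0.
- split; first by apply: zgen_gen; exists i, i, k, l.
  by rewrite /e3 TrA_Tel eq_sym (negbTE hil) eq_sym (negbTE hik) subr0.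
- split; first by apply: zgen_sub; apply: zgen_gen; apply: W2.
  by rewrite TrAB !TrA2 ?subrr // eq_sym.
- move: hi hi'; rewrite !inE !negb_or => /andP[hij hik] /andP[hij' hik'].
  have hkj : k != j by rewrite eq_sym.
  case: H => [->|->|->|->]; (split; first by apply: zgen_sub; apply: zgen_gen; (apply: W2 || apply: W4)).
  + by rewrite TrAB !TrA2 ?subrr // eq_sym.
  + by rewrite TrAB !TrA2 ?(monoC k j) ?subrr // eq_sym.
  + by rewrite TrAB TrA2 ?TrA4 ?subrr // eq_sym.
  + by rewrite TrAB TrA2 ?TrA4 ?(monoC k j) ?subrr // eq_sym.
- split; first by apply: zgen_sub; apply: zgen_gen; apply: W4.
  by rewrite TrAB !TrA4 ?(monoC k i) ?subrr // eq_sym.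
Qed.

Theorem proposition5p4 (g : nat) (hg : (2 <= g)%N) (t : T4 g) :
  N t <-> zgen (@Ngens g) t.
Proof.
split.
- by move=> [hW hT]; have := Wkey hg hW; rewrite hT phi0 subr0.
- elim => [|x hx|x y _ [hx1 hx2] _ [hy1 hy2]].
  + by split; [apply: zgen0 | apply: TrA0].
  + exact: Ngens_N.
  + by split; [apply: zgen_sub | rewrite TrAB hx2 hy2 subrr].
Qed.
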